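(* For integers $g\ge 0$ and $h,m\ge 1$, let $S^0_{gh}(K_m)$ be the graph obtained from the complete graph $K_m$ by attaching, at one vertex $u$, two pendant paths of lengths $g$ and $h$ that are disjoint except at $u$. Then \[ X_{S_{gh}^0(K_m)}=(m-1)!\Bigg(\sum_{z=0}^{m-1}e_z\,X_{P_{g+h+m-z}}-\sum_{z=1}^{m-1}\frac{X_{K_z^h}}{(z-1)!}\,X_{P_{g+m-z}}\Bigg). \]
   Context: All graphs are finite simple graphs. The chromatic symmetric function of a graph $G$ is $X_G=\sum_{\kappa}\prod_{v\in V(G)}x_{\kappa(v)}$, where $\kappa$ ranges over proper colorings $\kappa:V(G)\to\{1,2,\dots\}$; $e_z$ is the $z$-th elementary symmetric function, $e_0=1$. $P_j$ is the path on $j$ vertices. $K_z^h$ is the lollipop: the complete graph $K_z$ with a pendant path of length $h$ (with $h$ new vertices) attached at one vertex. *)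

(* Defs.v *)
From HB Require Import structures.
From mathcomp Require Import all_boot all_order all_algebra.
From mathcomp Require Import mpoly.
Set Implicit Arguments. Unset Strict Implicit. Unset Printing Implicit Defensive.
Import GRing.Theory.
Local Open Scope ring_scope.

(* A simple graph on a finite vertex type T is given by an adjacency relation.
   Symmetrization of an "i < j"-oriented edge description. *)
Definition symrel (T : eqType) (r : rel T) : rel T := fun x y => r x y || r y x.

Definition proper (T : finType) (e : rel T) (n : nat) (k : {ffun T -> 'I_n}) : bool :=
  [forall x, forall y, e x y ==> (k x != k y)].

(* Chromatic symmetric function X_G, in the n variables x_0,...,x_{n-1}
   (i.e. its image under x_i = 0 for i >= n), with rational coefficients. *)
Definition chromsym (n : nat) (T : finType) (e : rel T) : {mpoly rat[n]} :=
  \sum_(k : {ffun T -> 'I_n} | proper e k) \prod_(v : T) 'X_(k v).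

Definition path_adj (j : nat) : rel 'I_j :=
  symrel (fun a b : 'I_j => (val b == (val a).+1)).

(* Lollipop K_z^h on vertices 0..z+h-1: clique on 0..z-1, pendant path
   z-1, z, ..., z+h-1 (h new vertices). *)
Definition lollipop_adj (z h : nat) : rel 'I_(z + h) :=
  symrel (fun a b : 'I_(z + h) =>
    ((val a < val b) && (val b < z))%N ||
    ((val b == (val a).+1) && (z <= val b))%N).

(* S^0_{gh}(K_m) on vertices 0..m+h+g-1: clique on 0..m-1, u = m-1,
   pendant path of length h: u, m, ..., m+h-1,
   pendant path of length g: u, m+h, ..., m+h+g-1. *)
Definition spider_adj (g h m : nat) : rel 'I_(m + h + g) :=
  symrel (fun a b : 'I_(m + h + g) =>
    ((val a < val b) && (val b < m))%N ||
    ((val b == (val a).+1) && (m <= val b) && (val b < m + h))%N ||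
    ((val a == m.-1) && (val b == m + h))%N ||
    ((val b == (val a).+1) && (m + h <= val a))%N).

Definition XP (n j : nat) : {mpoly rat[n]} := chromsym n (@path_adj j).
Definition XK (n z h : nat) : {mpoly rat[n]} := chromsym n (@lollipop_adj z h).
Definition XS (n g h m : nat) : {mpoly rat[n]} := chromsym n (@spider_adj g h m).

(* Main.v *)
Require Import Defs.
From HB Require Import structures.
From mathcomp Require Import all_boot all_order all_algebra.
From mathcomp Require Import mpoly.
From mathcomp Require Import zify ring.
Set Implicit Arguments. Unset Strict Implicit. Unset Printing Implicit Defensive.
Import GRing.Theory.
Local Open Scope ring_scope.

Definition fjoin (C : Type) a b (f1 : {ffun 'I_a -> C}) (f2 : {ffun 'I_b -> C})
  : {ffun 'I_(a + b) -> C} :=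
  [ffun i => match split i with inl j => f1 j | inr k => f2 k end].

Lemma fjoinL (C : Type) a b (f1 : {ffun 'I_a -> C}) (f2 : {ffun 'I_b -> C}) j :
  fjoin f1 f2 (lshift b j) = f1 j.
Proof. by rewrite ffunE (unsplitK (inl _ j)). Qed.

Lemma fjoinR (C : Type) a b (f1 : {ffun 'I_a -> C}) (f2 : {ffun 'I_b -> C}) k :
  fjoin f1 f2 (rshift a k) = f2 k.
Proof. by rewrite ffunE (unsplitK (inr _ k)). Qed.

Lemma sum_ffun_split (R : nmodType) (C : finType) a b
   (F : {ffun 'I_(a + b) -> C} -> R) :
  \sum_f F f = \sum_(f1 : {ffun 'I_a -> C}) \sum_(f2 : {ffun 'I_b -> C}) F (fjoin f1 f2).
Proof.
rewrite pair_big /=.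
pose h (f : {ffun 'I_(a + b) -> C}) :=
  ([ffun j => f (lshift b j)], [ffun k => f (rshift a k)]).
rewrite (reindex h) /=.
  apply: eq_bigr => f _; congr F; apply/ffunP => i; rewrite !ffunE.
  by case: splitP => [j|k] /= eq; rewrite ffunE; congr (f _); apply: val_inj.
exists (fun p => fjoin p.1 p.2).
  move=> f _; rewrite /h /=.
  apply/ffunP => i; rewrite !ffunE.
  by case: splitP => [j|k] /= eq; rewrite ffunE; congr (f _); apply: val_inj.
move=> [f1 f2] _; rewrite /h /=.
f_equal; apply/ffunP => i; rewrite !ffunE.
  by rewrite (unsplitK (inl _ i)).
by rewrite (unsplitK (inr _ i)).
Qed.

Definition mono n N (f : {ffun 'I_N -> 'I_n}) : {mpoly rat[n]} := \prod_i 'X_(f i).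

Lemma mono_join n a b (f1 : {ffun 'I_a -> 'I_n}) (f2 : {ffun 'I_b -> 'I_n}) :
  mono (fjoin f1 f2) = mono f1 * mono f2.
Proof.
by rewrite /mono big_split_ord /=; congr (_ * _); apply: eq_bigr => i _;
  rewrite ?fjoinL ?fjoinR.
Qed.

Lemma mono1 n (d : 'I_n) : mono ([ffun _ => d] : {ffun 'I_1 -> 'I_n}) = 'X_d.
Proof. by rewrite /mono big_ord1 ffunE. Qed.

Lemma mono0 n (f : {ffun 'I_0 -> 'I_n}) : mono f = 1.
Proof. by rewrite /mono big_ord0. Qed.

Lemma mono_join1 n h (d : 'I_n) (f2 : {ffun 'I_h -> 'I_n}) :
  @mono n h.+1 (@fjoin _ 1 h [ffun _ => d] f2) = 'X_d * mono f2.
Proof. by rewrite -mono1 -(mono_join [ffun _ => d] f2). Qed.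

Lemma sum_ffun1 (R : nmodType) (C : finType) (F : {ffun 'I_1 -> C} -> R) :
  \sum_f F f = \sum_c F [ffun _ => c].
Proof.
rewrite (reindex (fun f : {ffun 'I_1 -> C} => f ord0)) /=.
  by apply: eq_bigr => f _; congr F; apply/ffunP => i; rewrite ffunE [i]ord1.
exists (fun c => [ffun _ => c]).
  by move=> f _; apply/ffunP => i; rewrite ffunE [i]ord1.
by move=> c _; rewrite ffunE.
Qed.

Lemma sum_ffun0 (R : nmodType) (C : finType) (F : {ffun 'I_0 -> C} -> R) f0 :
  \sum_f F f = F f0.
Proof.
rewrite (big_pred1 f0) // => f /=; symmetry; apply/eqP/ffunP => -[].
by move=> m i; exfalso; move: i; rewrite ltn0.
Qed.

Definition chain n h (f : {ffun 'I_h -> 'I_n}) : bool :=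
  [forall i : 'I_h, forall j : 'I_h, ((j : nat) == (i : nat).+1) ==> (f i != f j)].
Definition pathok n h (c : 'I_n) (f : {ffun 'I_h -> 'I_n}) : bool :=
  chain f && [forall j : 'I_h, ((j : nat) == 0%N) ==> (c != f j)].

Lemma proper_symrel n (T : finType) (r : rel T) (k : {ffun T -> 'I_n}) :
  Defs.proper (symrel r) k = [forall x, forall y, r x y ==> (k x != k y)].
Proof.
apply/forallP/forallP => H x; apply/forallP => y; apply/implyP => rxy.
  by move/forallP: (H x) => /(_ y)/implyP; apply; rewrite /symrel rxy.
case/orP: rxy => rxy.
  by move/forallP: (H x) => /(_ y)/implyP; apply.
by move/forallP: (H y) => /(_ x)/implyP/(_ rxy); rewrite eq_sym.
Qed.

Lemma chain_join n h (d : 'I_n) (f2 : {ffun 'I_h -> 'I_n}) :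
  @chain n h.+1 (@fjoin _ 1 h [ffun _ => d] f2) = pathok d f2.
Proof.
change (@chain n (1 + h) (@fjoin _ 1 h [ffun _ => d] f2) = pathok d f2).
apply/idP/idP.
  move=> /forallP H.
  have H' : forall x y : 'I_(1 + h), (y : nat) = (x : nat).+1 ->
      fjoin [ffun _ => d] f2 x != fjoin [ffun _ => d] f2 y.
    by move=> x y E; move/forallP: (H x) => /(_ y)/implyP; apply; rewrite E.
  apply/andP; split; apply/forallP => i.
    apply/forallP => j; apply/implyP => /eqP E.
    have := H' (rshift 1 i) (rshift 1 j); rewrite !fjoinR; apply => /=.
    by rewrite E.
  apply/implyP => /eqP E.
  have := H' (lshift h ord0) (rshift 1 i); rewrite fjoinL fjoinR ffunE; apply => /=.
  by rewrite E.
move=> /andP[/forallP H1 /forallP H2].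
apply/forallP => x; apply/forallP => y; apply/implyP => /eqP E.
rewrite !ffunE; case: splitP => [i0 Ex|i Ex]; case: splitP => [j0 Ey|j Ey] /=.
- by exfalso; move: (ltn_ord j0) (ltn_ord i0); lia.
- rewrite ffunE; move/implyP: (H2 j); apply; apply/eqP.
  by move: (ltn_ord i0); lia.
- by exfalso; move: (ltn_ord j0); lia.
- move/forallP: (H1 i) => /(_ j)/implyP; apply; apply/eqP; lia.
Qed.

Lemma pathok_join n h (c d : 'I_n) (f2 : {ffun 'I_h -> 'I_n}) :
  @pathok n h.+1 c (@fjoin _ 1 h [ffun _ => d] f2) = (c != d) && pathok d f2.
Proof.
change (@pathok n (1 + h) c (@fjoin _ 1 h [ffun _ => d] f2) = (c != d) && pathok d f2).
rewrite /pathok chain_join andbC; congr (_ && _).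
apply/forallP/idP => [H|cd x].
  by move/implyP: (H (lshift h ord0)); rewrite fjoinL ffunE; apply.
apply/implyP => /eqP x0; rewrite ffunE; case: splitP => [i0 _|j Ej].
  by rewrite ffunE.
by exfalso; move: Ej; rewrite x0.
Qed.

Fixpoint Dp (n h : nat) (c : 'I_n) : {mpoly rat[n]} :=
  if h is h'.+1 then \sum_(d | d != c) 'X_d * Dp h' d else 1.

Definition Pp (n j : nat) : {mpoly rat[n]} := \sum_d 'X_d * Dp j d.

Lemma Dp_path n h (c : 'I_n) :
  \sum_(f : {ffun 'I_h -> 'I_n} | pathok c f) mono f = Dp h c.
Proof.
elim: h c => [|h IH] c.
  rewrite big_mkcond (sum_ffun0 _ [ffun i : 'I_0 => c]) /= mono0.
  have -> : pathok c [ffun i : 'I_0 => c] by apply/andP; split; 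
    [apply/forallP => -[]|apply/forallP => -[]].
  by [].
rewrite big_mkcond (@sum_ffun_split _ _ 1 h) sum_ffun1 /= [RHS]big_mkcond.
apply: eq_bigr => d _; rewrite eq_sym.
under eq_bigr => f2 _ do rewrite pathok_join mono_join1.
case: (c != d) => /=; last by rewrite big1.
by rewrite -IH mulr_sumr [RHS]big_mkcond; apply: eq_bigr => f2 _; case: ifP; rewrite ?mulr0.
Qed.

Lemma chromsymE n N (e : rel 'I_N) :
  chromsym n e = \sum_(k : {ffun 'I_N -> 'I_n} | Defs.proper e k) mono k.
Proof. by []. Qed.

Lemma XP_eq n j : XP n j.+1 = Pp n j.
Proof.
rewrite /XP chromsymE /Pp big_mkcond (@sum_ffun_split _ _ 1 j) sum_ffun1 /=.
apply: eq_bigr => d _.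
under eq_bigr => f2 _ do rewrite /path_adj proper_symrel mono_join1.
rewrite -Dp_path mulr_sumr [RHS]big_mkcond; apply: eq_bigr => f2 _.
by rewrite -chain_join.
Qed.

Lemma sum_ffun_splitc (R : nmodType) (C : finType) N a b (e : (a + b = N)%N)
   (F : {ffun 'I_N -> C} -> R) :
  \sum_f F f = \sum_(f1 : {ffun 'I_a -> C}) \sum_(f2 : {ffun 'I_b -> C})
     F [ffun i => fjoin f1 f2 (cast_ord (esym e) i)].
Proof.
subst N; rewrite sum_ffun_split; apply: eq_bigr => f1 _; apply: eq_bigr => f2 _.
by congr F; apply/ffunP => i; rewrite [RHS]ffunE cast_ord_id.
Qed.

Definition Q n k (c : 'I_n) : {mpoly rat[n]} :=
  \sum_(f : {ffun 'I_k -> 'I_n} | injectiveb f && [forall i, f i != c]) mono f.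

Lemma clique_sum n m' (Psi : 'I_n -> {mpoly rat[n]}) :
  \sum_(f : {ffun 'I_m'.+1 -> 'I_n} | injectiveb f) mono f * Psi (f ord_max)
  = \sum_c 'X_c * Psi c * Q m' c.
Proof.
rewrite big_mkcond (sum_ffun_splitc (addn1 m')).
under eq_bigr => f1 _ do rewrite sum_ffun1.
rewrite exchange_big /=; apply: eq_bigr => c _.
rewrite /Q mulr_sumr [RHS]big_mkcond; apply: eq_bigr => f _.
set k := [ffun i0 => fjoin _ _ _].
have kA : forall (x : 'I_m'.+1) (i : 'I_m'), (x : nat) = i -> k x = f i.
  move=> x i E; rewrite /k ffunE ffunE; case: splitP => [j Ej|j Ej] /=.
    by congr (f _); apply: val_inj; rewrite /= -Ej.
  by exfalso; move: (ltn_ord i); rewrite /= in Ej; lia.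
have kB : forall (x : 'I_m'.+1), (x : nat) = m' -> k x = c.
  move=> x E; rewrite /k ffunE ffunE; case: splitP => [j Ej|j Ej] /=.
    by exfalso; move: (ltn_ord j); rewrite /= in Ej; lia.
  by rewrite ffunE.
have km : k ord_max = c by apply: kB.
have mk : mono k = mono f * 'X_c.
  rewrite /mono big_ord_recr /= km; congr (_ * _).
  by apply: eq_bigr => i _; rewrite (kA _ i).
have ik : injectiveb k = injectiveb f && [forall i, f i != c].
  apply/injectiveP/andP.
    move=> inj; split.
      apply/injectiveP => i j E.
      have := inj (widen_ord (leqnSn _) i) (widen_ord (leqnSn _) j).
      rewrite (kA _ i) // (kA _ j) // => /(_ E) /(congr1 val) /= E'.
      exact: val_inj.
    apply/forallP => i; apply/eqP => E.
    have := inj (widen_ord (leqnSn _) i) ord_max.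
    rewrite (kA _ i) // km => /(_ E) /(congr1 val) /= E'.
    by move: (ltn_ord i); lia.
  move=> [/injectiveP inj /forallP nc] x y.
  have [xl|xe] : (x < m')%N \/ (x : nat) = m' by move: (ltn_ord x); lia.
  - have [yl|ye] : (y < m')%N \/ (y : nat) = m' by move: (ltn_ord y); lia.
    + rewrite (kA x (Ordinal xl)) // (kA y (Ordinal yl)) // => /inj /(congr1 val) /= E.
      exact: val_inj.
    + rewrite (kA x (Ordinal xl)) // (kB y) // => E.
      by move: (nc (Ordinal xl)); rewrite E eqxx.
  - have [yl|ye] : (y < m')%N \/ (y : nat) = m' by move: (ltn_ord y); lia.
    + rewrite (kB x) // (kA y (Ordinal yl)) // => E.
      by move: (nc (Ordinal yl)); rewrite E eqxx.
    + by move=> _; apply: ord_inj; rewrite xe ye.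
rewrite ik km mk; case: ifP => _ //.
by rewrite [RHS]mulrC mulrA.
Qed.

Lemma proper_spider n g h m' (f1 : {ffun 'I_m'.+1 -> 'I_n})
    (f2 : {ffun 'I_h -> 'I_n}) (f3 : {ffun 'I_g -> 'I_n}) :
  Defs.proper (@spider_adj g h m'.+1) (fjoin (fjoin f1 f2) f3) =
  [&& injectiveb f1, pathok (f1 ord_max) f2 & pathok (f1 ord_max) f3].
Proof.
set k := fjoin (fjoin f1 f2) f3.
have kA : forall (x : 'I_(m'.+1 + h + g)) (i : 'I_m'.+1), (x : nat) = i -> k x = f1 i.
  move=> x i E; have -> : x = lshift g (lshift h i) by apply: val_inj; rewrite /= E.
  by rewrite /k !fjoinL.
have kB : forall (x : 'I_(m'.+1 + h + g)) (j : 'I_h), (x : nat) = (m'.+1 + j)%N -> k x = f2 j.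
  move=> x j E; have -> : x = lshift g (rshift m'.+1 j) by apply: val_inj; rewrite /= E.
  by rewrite /k fjoinL fjoinR.
have kC : forall (x : 'I_(m'.+1 + h + g)) (j : 'I_g), (x : nat) = (m'.+1 + h + j)%N -> k x = f3 j.
  move=> x j E; have -> : x = rshift (m'.+1 + h) j by apply: val_inj; rewrite /= E.
  by rewrite /k fjoinR.
rewrite /spider_adj proper_symrel.
apply/idP/idP.
  move=> /forallP H.
  have H' : forall x y : 'I_(m'.+1 + h + g),
      (((x : nat) < y) && ((y : nat) < m'.+1) ||
       ((y : nat) == (x : nat).+1) && (m'.+1 <= y) && ((y : nat) < m'.+1 + h) ||
       ((x : nat) == m') && ((y : nat) == m'.+1 + h) ||
       ((y : nat) == (x : nat).+1) && (m'.+1 + h <= x))%N -> k x != k y.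
    by move=> x y rxy; move/forallP: (H x) => /(_ y)/implyP; apply.
  apply/and3P; split.
  - apply/injectiveP => i j E; apply/eqP; apply: contraT => ne.
    have [lt|lt] : (i < j)%N \/ (j < i)%N by move: ne; rewrite neq_ltn => /orP.
      have := H' (lshift g (lshift h i)) (lshift g (lshift h j)).
      rewrite (kA _ i) // (kA _ j) // E eqxx; apply => /=.
      by move: (ltn_ord j); lia.
    have := H' (lshift g (lshift h j)) (lshift g (lshift h i)).
    rewrite (kA _ j) // (kA _ i) // E eqxx; apply => /=.
    by move: (ltn_ord i); lia.
  - apply/andP; split.
      apply/forallP => i; apply/forallP => j; apply/implyP => /eqP E.
      have := H' (lshift g (rshift m'.+1 i)) (lshift g (rshift m'.+1 j)).
      rewrite (kB _ i) // (kB _ j) //; apply => /=.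
      by move: (ltn_ord j); lia.
    apply/forallP => j; apply/implyP => /eqP E.
    have := H' (lshift g (lshift h ord_max)) (lshift g (rshift m'.+1 j)).
    rewrite (kA _ ord_max) // (kB _ j) //; apply => /=.
    by move: (ltn_ord j); lia.
  - apply/andP; split.
      apply/forallP => i; apply/forallP => j; apply/implyP => /eqP E.
      have := H' (rshift (m'.+1 + h) i) (rshift (m'.+1 + h) j).
      rewrite (kC _ i) // (kC _ j) //; apply => /=.
      by move: (ltn_ord j); lia.
    apply/forallP => j; apply/implyP => /eqP E.
    have := H' (lshift g (lshift h ord_max)) (rshift (m'.+1 + h) j).
    rewrite (kA _ ord_max) // (kC _ j) //; apply => /=.
    by lia.
move=> /and3P[/injectiveP inj /andP[/forallP c2 /forallP z2] /andP[/forallP c3 /forallP z3]].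
apply/forallP => x; apply/forallP => y; apply/implyP => rxy0.
have rxy : (((x : nat) < y) && ((y : nat) < m'.+1) ||
       ((y : nat) == (x : nat).+1) && (m'.+1 <= y) && ((y : nat) < m'.+1 + h) ||
       ((x : nat) == m') && ((y : nat) == m'.+1 + h) ||
       ((y : nat) == (x : nat).+1) && (m'.+1 + h <= x))%N by exact: rxy0.
clear rxy0.
have Hx := ltn_ord x; have Hy := ltn_ord y.
have [x1|x1] := ltnP x m'.+1; [|have [x2|x2] := ltnP x (m'.+1 + h)];
  (have [y1|y1] := ltnP y m'.+1; [|have [y2|y2] := ltnP y (m'.+1 + h)]).
- rewrite (kA x (Ordinal x1)) // (kA y (Ordinal y1)) //.
  by apply/eqP => /inj /(congr1 val) /=; lia.
- have h0 : (0 < h)%N by lia.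
  rewrite (kA x ord_max) /=; last by lia.
  rewrite (kB y (Ordinal h0)) /=; last by lia.
  by move/implyP: (z2 (Ordinal h0)); apply.
- have g0 : (0 < g)%N by lia.
  rewrite (kA x ord_max) /=; last by lia.
  rewrite (kC y (Ordinal g0)) /=; last by lia.
  by move/implyP: (z3 (Ordinal g0)); apply.
- by exfalso; lia.
- have xh : (x - m'.+1 < h)%N by lia.
  have yh : (y - m'.+1 < h)%N by lia.
  rewrite (kB x (Ordinal xh)) /=; last by lia.
  rewrite (kB y (Ordinal yh)) /=; last by lia.
  move/forallP: (c2 (Ordinal xh)) => /(_ (Ordinal yh))/implyP; apply => /=.
  by apply/eqP; lia.
- by exfalso; lia.
- by exfalso; lia.
- by exfalso; lia.
- have xg : (x - (m'.+1 + h) < g)%N by lia.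
  have yg : (y - (m'.+1 + h) < g)%N by lia.
  rewrite (kC x (Ordinal xg)) /=; last by lia.
  rewrite (kC y (Ordinal yg)) /=; last by lia.
  move/forallP: (c3 (Ordinal xg)) => /(_ (Ordinal yg))/implyP; apply => /=.
  by apply/eqP; lia.
Qed.

Lemma XS_eq n g h m' :
  XS n g h m'.+1 = \sum_c 'X_c * (Dp g c * Dp h c) * Q m' c.
Proof.
rewrite /XS chromsymE big_mkcond sum_ffun_split sum_ffun_split.
rewrite -clique_sum [RHS]big_mkcond; apply: eq_bigr => f1 _.
under eq_bigr => f2 _ do under eq_bigr => f3 _ do rewrite proper_spider !mono_join.
case: (injectiveb f1) => /=; last by rewrite big1 // => f2 _; rewrite big1.
rewrite -(@Dp_path n g) -(@Dp_path n h) mulrC mulr_suml mulr_suml [RHS]big_mkcond.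
rewrite exchange_big /=; apply: eq_bigr => f2 _.
case: (pathok (f1 ord_max) f2) => /=; last by rewrite big1 // => f _; rewrite andbF.
rewrite mulr_sumr mulr_suml [RHS]big_mkcond; apply: eq_bigr => f _.
rewrite andbT; case: ifP => _ //.
by rewrite mulrC [mono f1 * _]mulrC mulrA.
Qed.

Lemma proper_lollipop n h m' (f1 : {ffun 'I_m'.+1 -> 'I_n})
    (f2 : {ffun 'I_h -> 'I_n}) :
  Defs.proper (@lollipop_adj m'.+1 h) (fjoin f1 f2) =
  injectiveb f1 && pathok (f1 ord_max) f2.
Proof.
set k := fjoin f1 f2.
have kA : forall (x : 'I_(m'.+1 + h)) (i : 'I_m'.+1), (x : nat) = i -> k x = f1 i.
  move=> x i E; have -> : x = lshift h i by apply: val_inj; rewrite /= E.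
  by rewrite /k !fjoinL.
have kB : forall (x : 'I_(m'.+1 + h)) (j : 'I_h), (x : nat) = (m'.+1 + j)%N -> k x = f2 j.
  move=> x j E; have -> : x = rshift m'.+1 j by apply: val_inj; rewrite /= E.
  by rewrite /k fjoinR.
rewrite /lollipop_adj proper_symrel.
apply/idP/idP.
  move=> /forallP H.
  have H' : forall x y : 'I_(m'.+1 + h),
      (((x : nat) < y) && ((y : nat) < m'.+1) ||
       ((y : nat) == (x : nat).+1) && (m'.+1 <= y))%N -> k x != k y.
    by move=> x y rxy; move/forallP: (H x) => /(_ y)/implyP; apply.
  apply/andP; split.
  - apply/injectiveP => i j E; apply/eqP; apply: contraT => ne.
    have [lt|lt] : (i < j)%N \/ (j < i)%N by move: ne; rewrite neq_ltn => /orP.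
      have := H' (lshift h i) (lshift h j).
      rewrite (kA _ i) // (kA _ j) // E eqxx; apply => /=.
      by move: (ltn_ord j); lia.
    have := H' (lshift h j) (lshift h i).
    rewrite (kA _ j) // (kA _ i) // E eqxx; apply => /=.
    by move: (ltn_ord i); lia.
  - apply/andP; split.
      apply/forallP => i; apply/forallP => j; apply/implyP => /eqP E.
      have := H' (rshift m'.+1 i) (rshift m'.+1 j).
      rewrite (kB _ i) // (kB _ j) //; apply => /=.
      by move: (ltn_ord j); lia.
    apply/forallP => j; apply/implyP => /eqP E.
    have := H' (lshift h ord_max) (rshift m'.+1 j).
    rewrite (kA _ ord_max) // (kB _ j) //; apply => /=.
    by move: (ltn_ord j); lia.
move=> /andP[/injectiveP inj /andP[/forallP c2 /forallP z2]].
apply/forallP => x; apply/forallP => y; apply/implyP => rxy0.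
have rxy : (((x : nat) < y) && ((y : nat) < m'.+1) ||
       ((y : nat) == (x : nat).+1) && (m'.+1 <= y))%N by exact: rxy0.
clear rxy0.
have Hx := ltn_ord x; have Hy := ltn_ord y.
have [x1|x1] := ltnP x m'.+1; have [y1|y1] := ltnP y m'.+1.
- rewrite (kA x (Ordinal x1)) // (kA y (Ordinal y1)) //.
  by apply/eqP => /inj /(congr1 val) /=; lia.
- have h0 : (0 < h)%N by lia.
  have [xe|xne] := eqVneq (x : nat) m'.
    rewrite (kA x ord_max) //.
    rewrite (kB y (Ordinal h0)) /=; last by lia.
    by move/implyP: (z2 (Ordinal h0)); apply.
  by exfalso; lia.
- by exfalso; lia.
- have xh : (x - m'.+1 < h)%N by lia.
  have yh : (y - m'.+1 < h)%N by lia.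
  rewrite (kB x (Ordinal xh)) /=; last by lia.
  rewrite (kB y (Ordinal yh)) /=; last by lia.
  move/forallP: (c2 (Ordinal xh)) => /(_ (Ordinal yh))/implyP; apply => /=.
  by apply/eqP; lia.
Qed.

Lemma XK_eq n z' h :
  XK n z'.+1 h = \sum_c 'X_c * Dp h c * Q z' c.
Proof.
rewrite /XK chromsymE big_mkcond sum_ffun_split.
rewrite -clique_sum [RHS]big_mkcond; apply: eq_bigr => f1 _.
under eq_bigr => f2 _ do rewrite proper_lollipop !mono_join.
case: (injectiveb f1) => /=; last by rewrite big1.
rewrite -(@Dp_path n h) mulr_sumr [RHS]big_mkcond; apply: eq_bigr => f2 _.
by case: ifP => _; rewrite ?mulr0.
Qed.

Definition Es (n k : nat) (c : 'I_n) : {mpoly rat[n]} :=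
  \sum_(S : {set 'I_n} | (c \notin S) && (#|S| == k)) \prod_(i in S) 'X_i.


Lemma inj_sum n k (c : 'I_n) :
  \sum_(f : {ffun 'I_k -> 'I_n} | injectiveb f && [forall i, f i != c]) mono f
  = Es k c *+ k`!.
Proof.
rewrite /Es -sumrMnl.
rewrite (partition_big (fun f : {ffun 'I_k -> 'I_n} => f @: [set: 'I_k])
          (fun S : {set 'I_n} => (c \notin S) && (#|S| == k))) /=; last first.
  move=> f /andP[/injectiveP inj /forallP nc]; apply/andP; split.
    by apply/imsetP => -[i _ E]; move: (nc i); rewrite -E eqxx.
  by rewrite card_imset // cardsT card_ord.
apply: eq_bigr => S /andP[cS /eqP cardS].
transitivity (\sum_(f : {ffun 'I_k -> 'I_n} | f \in [set f in ffun_on (mem S) | injectiveb f])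
                 \prod_(i in S) ('X_i : {mpoly rat[n]})).
  apply: eq_big => f.
    rewrite !inE; apply/idP/idP.
      move=> /andP[/andP[inj _] /eqP E]; rewrite inj andbT.
      by apply/ffun_onP => i; rewrite -E; apply: imset_f.
    move=> /andP[/ffun_onP on inj]; rewrite inj /=.
    have sub : f @: [set: 'I_k] \subset S.
      by apply/subsetP => s /imsetP[i _ ->]; apply: on.
    have E : f @: [set: 'I_k] = S.
      apply/eqP; rewrite eqEcard sub /= cardS card_imset ?cardsT ?card_ord //.
      exact/injectiveP.
    rewrite E eqxx andbT; apply/forallP => i; apply/eqP => fic.
    by move: cS; rewrite -fic on.
  move=> /andP[/andP[/injectiveP inj _] /eqP E].
  rewrite /mono -E big_imset /=; last by move=> i j _ _; apply: inj.
  by apply: eq_bigl => i; rewrite inE.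
rewrite sumr_const; congr (_ *+ _).
by rewrite card_inj_ffuns_on card_ord cardS ffactnn.
Qed.

Lemma Dp_rec n j (c : 'I_n) : Dp j.+1 c = Pp n j - 'X_c * Dp j c.
Proof. by rewrite /Pp (bigD1 c) //= addrC addrK. Qed.

Lemma glue1 n a b :
  \sum_(c : 'I_n) 'X_c * Dp a.+1 c * Dp b c = \sum_(c : 'I_n) 'X_c * Dp a c * Dp b.+1 c.
Proof.
rewrite /=.
transitivity (\sum_(c : 'I_n) \sum_(d : 'I_n | d != c) 'X_c * 'X_d * Dp a d * Dp b c).
  apply: eq_bigr => c _; rewrite mulr_sumr mulr_suml; apply: eq_bigr => d _.
  by rewrite !mulrA.
transitivity (\sum_(c : 'I_n) \sum_(d : 'I_n | d != c) 'X_c * 'X_d * Dp a c * Dp b d);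
  last first.
  apply: eq_bigr => c _; rewrite mulr_sumr; apply: eq_bigr => d _.
  by rewrite -!mulrA; congr (_ * _); rewrite mulrC -!mulrA; congr (_ * _); rewrite mulrC.
under eq_bigr => c _ do rewrite big_mkcond.
rewrite exchange_big /=; apply: eq_bigr => d _; rewrite [RHS]big_mkcond.
apply: eq_bigr => c _ /=; rewrite eq_sym; case: ifP => // _.
by congr (_ * _ * _); rewrite mulrC.
Qed.

Lemma glue_all n a b :
  \sum_(c : 'I_n) 'X_c * Dp a c * Dp b c = Pp n (a + b).
Proof.
elim: a b => [|a IH] b.
  by apply: eq_bigr => c _; rewrite /= mulr1.
by rewrite glue1 IH addSnnS.
Qed.

Lemma Es0 n (c : 'I_n) : Es 0 c = 1.
Proof.
rewrite /Es (bigD1 set0) /=; last by rewrite in_set0 cards0.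
rewrite big_set0 big1 ?addr0 // => S /andP[/andP[_ /eqP/cards0_eq ->]].
by rewrite eqxx.
Qed.

Lemma Es_rec n k (c : 'I_n) : mesym n rat k.+1 = Es k.+1 c + 'X_c * Es k c.
Proof.
rewrite /mesym (bigID (fun S : {set 'I_n} => c \in S)) /= addrC; congr (_ + _).
  by apply: eq_bigl => S; rewrite andbC.
rewrite /Es mulr_sumr.
rewrite (reindex_onto (fun T => c |: T) (fun S => S :\ c)) /=; last first.
  by move=> S /andP[_ cS]; rewrite setD1K.
apply: eq_big => T.
  rewrite setU11 andbT cardsU1.
  case cT: (c \in T) => /=.
    apply/negbTE; apply/negP => /andP[_ /eqP E].
    by move: cT; rewrite -E setD11.
  by rewrite add1n eqSS andbC setU1K ?cT // eqxx.
move/andP=> [_ /eqP E].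
have cT : c \notin T by rewrite -E setD11.
by rewrite big_setU1.
Qed.

Lemma mainF n (c : 'I_n) k : forall g,
  Dp g c * Es k c =
  \sum_(z < k.+1) mesym n rat z * Dp (g + k - z) c
  - \sum_(1 <= z < k.+1) Es z.-1 c * Pp n (g + k - z).
Proof.
elim: k => [|k IH] g.
  by rewrite Es0 big_ord1 big_geq // mesym0E subr0 mul1r mulr1 addn0 subn0.
have E1 : Es k.+1 c = mesym n rat k.+1 - 'X_c * Es k c by rewrite (Es_rec k c) addrK.
have E2 : 'X_c * Dp g c = Pp n g - Dp g.+1 c by rewrite Dp_rec opprB addrC subrK.
rewrite E1 mulrBr mulrA [Dp g c * 'X_c]mulrC E2 mulrBl IH.
rewrite [in RHS]big_ord_recr [in RHS]big_nat_recr //=.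
have -> : \sum_(i < k.+1) mesym n rat i * Dp (g.+1 + k - i) c
        = \sum_(i < k.+1) mesym n rat i * Dp (g + k.+1 - i) c.
  by apply: eq_bigr => i _; rewrite addSnnS.
have -> : \sum_(1 <= i < k.+1) Es i.-1 c * Pp n (g.+1 + k - i)
        = \sum_(1 <= i < k.+1) Es i.-1 c * Pp n (g + k.+1 - i).
  by apply: eq_bigr => i _; rewrite addSnnS.
have -> : (g + k.+1 - k.+1 = g)%N by rewrite addnK.
set A := \sum_(i < k.+1) _. set B := \sum_(1 <= i < k.+1) _.
rewrite [Es k c * _]mulrC [mesym n rat k.+1 * _]mulrC.
ring.
Qed.


Lemma Q_Es n k (c : 'I_n) : Q k c = Es k c *+ k`!.
Proof. exact: inj_sum. Qed.

Lemma sumQ n z' h :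
  \sum_(c : 'I_n) 'X_c * Dp h c * Q z' c = (\sum_c 'X_c * Dp h c * Es z' c) *+ z'`!.
Proof. rewrite -sumrMnl; apply: eq_bigr => c _; by rewrite Q_Es mulrnAr. Qed.

Unset Implicit Arguments.

Theorem corollary4p7 (g h m : nat) (hh : (1 <= h)%N) (hm : (1 <= m)%N) (n : nat) :
  XS n g h m =
  ((m.-1)`!)%:R *:
    (\sum_(z < m) mesym n rat z * XP n (g + h + m - z)
     - \sum_(1 <= z < m) (((z.-1)`!)%:R^-1 : rat) *: (XK n z h * XP n (g + m - z))).
Proof.
case: m hm => [//|m'] _ /=.
have L : XS n g h m'.+1 =
    (m'`!)%:R *: \sum_c 'X_c * Dp h c * (Dp g c * Es m' c).
  rewrite XS_eq scaler_nat -sumrMnl; apply: eq_bigr => c _.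
  by rewrite Q_Es mulrnAr; congr (_ *+ _); ring.
rewrite L; congr (_ *: _).
rewrite (eq_bigr _ (fun c _ => congr1 (fun t => _ * t) (mainF c m' g))).
under eq_bigr => c _ do rewrite mulrBr.
rewrite sumrB; congr (_ - _).
  transitivity (\sum_(c < n) \sum_(z < m'.+1)
      'X_c * Dp h c * (mesym n rat z * Dp (g + m' - z) c)).
    by apply: eq_bigr => c _; rewrite mulr_sumr.
  rewrite exchange_big /=; apply: eq_bigr => z _.
  have -> : (g + h + m'.+1 - z = (h + (g + m' - z)).+1)%N by move: (ltn_ord z); lia.
  rewrite XP_eq -glue_all mulr_sumr; apply: eq_bigr => c _; ring.
transitivity (\sum_(c < n) \sum_(1 <= z < m'.+1)
      'X_c * Dp h c * (Es z.-1 c * Pp n (g + m' - z))).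
  by apply: eq_bigr => c _; rewrite mulr_sumr.
rewrite exchange_big /=; apply: eq_big_nat => z /andP[z1 zm].
case: z z1 zm => // z' _ zm /=.
have -> : (g + m'.+1 - z'.+1 = (g + m' - z'.+1).+1)%N by lia.
rewrite XP_eq XK_eq.
rewrite sumQ.
rewrite mulrnAl -scaler_nat scalerA mulVf ?scale1r; last first.
  by rewrite Num.Theory.pnatr_eq0 -lt0n fact_gt0.
rewrite mulr_suml; apply: eq_bigr => c _; ring.
Qed.
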